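(* Let $r\geq 1$ be an integer. For $n\geq 0$ write $\prod_{j=0}^{n-1}\left(1+x^{2^j}\right)^3=\sum_{k\geq 0}c_k(n)x^k$ and let $u(n)=\sum_{k\geq 0}c_k(n)^r$. Then there exist rational constants $c_0,\dots,c_r$ (depending on $r$) such that $$u(n)=\sum_{i=0}^{r}c_i\,2^{(2i+1)n}\quad\text{for all } n\geq 0.$$ *)

(* Defs.v *)
From mathcomp Require Import all_boot all_order all_algebra.
Set Implicit Arguments. Unset Strict Implicit. Unset Printing Implicit Defensive.
Import Order.TTheory GRing.Theory Num.Theory.
Local Open Scope ring_scope.

Definition Ppoly (n : nat) : {poly int} :=
  \prod_(j < n) (1 + 'X^(2 ^ j)) ^+ 3.

Definition cc (n k : nat) : int := (Ppoly n)`_k.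

(* u(n) = sum_{k>=0} c_k(n)^r ; coefficients vanish for k >= size (Ppoly n),
   and r >= 1 so those terms are 0. *)
Definition u (r n : nat) : int := \sum_(k < size (Ppoly n)) (cc n k) ^+ r.

(* Main.v *)
Require Import Defs.
From mathcomp Require Import all_boot all_order all_algebra.
Import GRing.Theory Num.Theory.
Local Open Scope ring_scope.
From mathcomp Require Import ring lra zify.

Definition Bg {R : comNzRingType} (h t : R) : R := h * ((t + 1) * (t + 2)).
Definition Bq (t : rat) : rat := Bg (2^-1) t.
Definition beta (m : int) : rat := if (0 <= m) then Bq m%:~R else 0.

Lemma beta_neg m : m < 0 -> beta m = 0.
Proof. by move=> h; rewrite /beta; case: ifP => // h0; exfalso; lia. Qed.
Lemma beta_pos m : 0 <= m -> beta m = Bq m%:~R.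
Proof. by rewrite /beta => ->. Qed.

Lemma D3 (m : int) : beta m - 3 * beta (m - 1) + 3 * beta (m - 2) - beta (m - 3) = (m == 0)%:R.
Proof.
have : (m < 0 \/ m = 0 \/ m = 1 \/ m = 2 \/ 3 <= m) by lia.
case=> [h|[->|[->|[->|h]]]].
- rewrite !beta_neg; try lia. have -> : (m == 0) = false by apply/eqP; lia. by rewrite /=; ring.
- by apply/eqP; vm_compute.
- by apply/eqP; vm_compute.
- by apply/eqP; vm_compute.
- rewrite !beta_pos; try lia. have -> : (m == 0) = false by apply/eqP; lia.
  rewrite /Bq /Bg !intrD /=. ring.
Qed.

Definition gz (N : nat) (m : int) : rat :=
  beta m - 3 * beta (m - N%:Z) + 3 * beta (m - (2 * N)%:Z) - beta (m - (3 * N)%:Z).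

Lemma gz_neg N m : m < 0 -> gz N m = 0.
Proof. move=> h; rewrite /gz !beta_neg; try lia. ring. Qed.

Lemma gz_big N m : (3 * N)%:Z <= m -> gz N m = 0.
Proof.
move=> h; rewrite /gz !beta_pos; try lia.
rewrite /Bq /Bg !intrD !intrN !PoszM !intrM /=. ring.
Qed.

Lemma D3' (m k : int) : beta (m - k) - 3 * beta (m - 1 - k) + 3 * beta (m - 2 - k) - beta (m - 3 - k) = (m == k)%:R.
Proof. by have := D3 (m - k); rewrite !(addrAC m (-k)) subr_eq0. Qed.

Lemma gzD3 N m : gz N m - 3 * gz N (m - 1) + 3 * gz N (m - 2) - gz N (m - 3) =
  (m == 0)%:R - 3 * (m == N%:Z)%:R + 3 * (m == (2 * N)%:Z)%:R - (m == (3 * N)%:Z)%:R.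
Proof.
have h0 := D3 m. have h1 := D3' m N. have h2 := D3' m (2 * N)%:Z. have h3 := D3' m (3 * N)%:Z.
rewrite /gz. lra.
Qed.

Lemma coef_cubic (p : {poly rat}) (f : int -> rat) k :
  (forall k : nat, p`_k = f k) -> (forall m, m < 0 -> f m = 0) ->
  ((1 - 'X)^+3 * p)`_k = f k - 3 * f (k%:Z - 1) + 3 * f (k%:Z - 2) - f (k%:Z - 3).
Proof.
move=> hp hf.
have -> : (1 - 'X)^+3 * p = p - ('X * p) *+ 3 + ('X^2 * p) *+ 3 - 'X^3 * p.
  by ring.
rewrite !coefD !coefN !coefMn coefXM !coefXnM.
have hf' : forall m : int, f m = if m < 0 then 0 else p`_(`|m|%N).
  move=> m; case: ifP => h; first by rewrite hf.
  by rewrite hp gez0_abs //; lia.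
rewrite !hf'.
case: k => [|[|[|k]]] /=.
all: rewrite ?subSS ?subn0 ?add0n; ring.
Qed.

Definition Prat (n : nat) : {poly rat} := \prod_(j < n) (1 + 'X^(2 ^ j)) ^+ 3.
Definition H (N : nat) : {poly rat} := \poly_(k < 3 * N) gz N k.

Lemma prod_tel n : (1 - 'X) * \prod_(j < n) (1 + 'X^(2 ^ j)) = 1 - 'X^(2 ^ n) :> {poly rat}.
Proof.
elim: n => [|n IH]; first by rewrite big_ord0 expn0 mulr1.
rewrite big_ord_recr /= mulrA IH expnSr exprM. ring.
Qed.

Lemma coefH N k : (H N)`_k = gz N k.
Proof.
rewrite coef_poly; case: ifP => // h.
rewrite gz_big //; lia.
Qed.

Lemma Prat_H n : Prat n = H (2 ^ n).
Proof.
set N := (2 ^ n)%N.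
have nz : (1 - 'X : {poly rat})^+3 != 0.
  rewrite expf_neq0 // -opprB oppr_eq0 (_ : 1 = 1%:P) //. by rewrite polyXsubC_eq0.
apply: (mulfI nz).
rewrite /Prat prodrXl -exprMn prod_tel -/N.
apply/polyP => k.
rewrite (coef_cubic (H N) (gz N) k (coefH N)); last by move=> m hm; rewrite gz_neg.
rewrite gzD3.
have -> : (1 - 'X^N : {poly rat}) ^+ 3 = 1 - 'X^N *+ 3 + 'X^(2 * N) *+ 3 - 'X^(3 * N).
  rewrite mulnC exprM (mulnC 3) exprM. ring.
rewrite !coefD !coefN !coefMn coef1 !coefXn !eqz_nat.
ring.
Qed.

Lemma map_Ppoly n : map_poly intr (Ppoly n) = Prat n.
Proof.
rewrite /Ppoly /Prat rmorph_prod; apply: eq_bigr => j _.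
by rewrite rmorphXn rmorphD rmorph1 rmorphXn /= map_polyX.
Qed.

Lemma u_eq r n : (1 <= r)%N ->
  (u r n)%:~R = \sum_(k < 3 * 2 ^ n) (gz (2 ^ n) k) ^+ r.
Proof.
move=> hr.
set N := (2 ^ n)%N.
have hc : forall k, (cc n k)%:~R = gz N k :> rat.
  move=> k; rewrite /cc -(coef_map intr) map_Ppoly Prat_H coefH //.
have hs : (size (Ppoly n) <= 3 * N)%N.
  rewrite -(size_map_inj_poly (@intr_inj rat) _ (Ppoly n)) // map_Ppoly Prat_H.
  exact: size_poly.
rewrite /u rmorph_sum /=.
rewrite (eq_bigr (fun k : 'I_(size (Ppoly n)) => (gz N k) ^+ r)); last first.
  by move=> k _; rewrite rmorphXn /= hc.
rewrite (big_ord_widen _ (fun k => (gz N k) ^+ r) hs) big_mkcond /=.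
apply: eq_bigr => k _.
case: ifP => // h.
rewrite -hc /cc nth_default ?expr0n; last by rewrite leqNgt h.
by case: r hr.
Qed.

Definition Fg {R : comNzRingType} (r : nat) (h x y : R) : R :=
  Bg h y ^+ r + (Bg h (x + y) - 3 * Bg h y) ^+ r
  + (Bg h (x + x + y) - 3 * Bg h (x + y) + 3 * Bg h y) ^+ r.

Lemma beta_sub (k a : nat) : beta (k%:Z - a%:Z) = if (a <= k)%N then Bq (k%:R - a%:R) else 0.
Proof.
case: ifP => h.
- rewrite beta_pos; last lia. by rewrite intrB.
- rewrite beta_neg //. move/negbT: h. rewrite -ltnNge => h. lia.
Qed.

Lemma beta_nat (k : nat) : beta k%:Z = Bq k%:R.
Proof. by rewrite beta_pos. Qed.

Ltac solve_ifs := repeat match goal with |- context [if ?b then _ else _] =>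
  let H := fresh in case H: b; try (exfalso; move: H; (move/negbT || move=> ?); lia) end.

Lemma gz0 N j : (j < N)%N -> gz N j = Bq j%:R.
Proof.
move=> h; rewrite /gz !beta_sub beta_nat. solve_ifs. rewrite /Bq /Bg; ring.
Qed.

Lemma gz1 N j : (j < N)%N -> gz N (N + j)%N = Bq (N%:R + j%:R) - 3 * Bq j%:R.
Proof.
move=> h; rewrite /gz !beta_sub beta_nat. solve_ifs. rewrite /Bq /Bg natrD ?natrM; ring.
Qed.

Lemma gz2 N j : (j < N)%N -> gz N (N + (N + j))%N =
  Bq (N%:R + N%:R + j%:R) - 3 * Bq (N%:R + j%:R) + 3 * Bq j%:R.
Proof.
move=> h; rewrite /gz !beta_sub beta_nat. solve_ifs. rewrite /Bq /Bg !natrD ?natrM; ring.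
Qed.

Lemma sum_blocks r N : \sum_(k < 3 * N) (gz N k) ^+ r = \sum_(j < N) Fg r (2^-1) (N%:R) (j%:R).
Proof.
have -> : (3 * N = N + (N + N))%N by lia.
rewrite !big_split_ord /= -!big_split /=.
apply: eq_bigr => j _.
rewrite gz0 // gz1 // gz2 //.
by rewrite /Fg /Bq addrA.
Qed.

Lemma mono_family d : exists T : nat -> {poly rat}, forall i, (i < d)%N ->
  [/\ (T i).[0] = 0, (forall x, (T i).[x + 1] - (T i).[x] = x ^+ i) & (size (T i) <= i.+2)%N].
Proof.
elim: d => [|d [T HT]]; first by exists (fun _ => 0).
pose Td := (d.+1)%:R^-1 *: ('X^(d.+1) - \sum_(i < d) 'C(d.+1, i)%:R *: T i).
exists (fun i => if (i < d)%N then T i else Td) => i hi.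
case: ifP => hid; first exact: HT.
have -> : i = d by lia.
split.
- rewrite /Td hornerZ hornerD hornerN horner_sum hornerXn expr0n /= big1 ?subrr ?mulr0 //.
  move=> k _; rewrite hornerZ; have [-> _ _] := HT k (ltn_ord k); by rewrite mulr0.
- move=> x; rewrite /Td !hornerZ !hornerD !hornerN !horner_sum !hornerXn.
  have e : forall y, \sum_(i < d) ('C(d.+1, i)%:R *: T i).[y] = \sum_(i < d) 'C(d.+1, i)%:R * (T i).[y].
    by move=> y; apply: eq_bigr => k _; rewrite hornerZ.
  rewrite !e.
  have -> : \sum_(i < d) 'C(d.+1, i)%:R * (T i).[x + 1] =
            \sum_(i < d) 'C(d.+1, i)%:R * (T i).[x] + \sum_(i < d) 'C(d.+1, i)%:R * x ^+ i.
    rewrite -big_split /=; apply: eq_bigr => k _.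
    have [_ hk _] := HT k (ltn_ord k).
    rewrite -mulrDr; congr (_ * _); rewrite -hk; ring.
  rewrite exprD1n !big_ord_recr /= binn binSn.
  have -> : \sum_(i < d) x ^+ i *+ 'C(d.+1, i) = \sum_(i < d) 'C(d.+1, i)%:R * x ^+ i.
    by apply: eq_bigr => k _; rewrite mulr_natl.
  have hd : (d.+1)%:R != 0 :> rat by rewrite pnatr_eq0.
  set S1 := \sum_(i < d) _ * (T i).[x]. set S2 := \sum_(i < d) _ * x ^+ i.
  rewrite -mulr_natl. field. by rewrite addrC natr1 pnatr_eq0.
- rewrite /Td; apply: leq_trans (size_scale_leq _ _) _.
  apply: leq_trans (size_polyD _ _) _.
  rewrite geq_max size_polyXn leqnn /= size_polyN.
  apply: leq_trans (size_sum _ _ _) _.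
  apply/bigmax_leqP => k _; apply: leq_trans (size_scale_leq _ _) _.
  have [_ _ hk] := HT k (ltn_ord k). apply: (leq_trans hk). have := ltn_ord k; lia.
Qed.

Definition antiP (S p : {poly rat}) :=
  [/\ S.[0] = 0, (forall x, S.[x + 1] - S.[x] = p.[x]) & (size S <= (size p).+1)%N].

Lemma antider_family (n : nat) (f : nat -> {poly rat}) :
  exists S : nat -> {poly rat}, forall a, (a < n)%N -> antiP (S a) (f a).
Proof.
have [T HT] := mono_family (\sum_(a < n) size (f a)).
exists (fun a => \sum_(i < size (f a)) (f a)`_i *: T i) => a ha.
have hT : forall i, (i < size (f a))%N -> [/\ (T i).[0] = 0,
   (forall x, (T i).[x + 1] - (T i).[x] = x ^+ i) & (size (T i) <= i.+2)%N].
  move=> i hi; apply: HT; apply: (leq_trans hi).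
  by rewrite (bigD1 (Ordinal ha)) //= leq_addr.
split.
- rewrite horner_sum big1 // => i _; rewrite hornerZ; have [-> _ _] := hT i (ltn_ord i); by rewrite mulr0.
- move=> x; rewrite !horner_sum -sumrB horner_coef; apply: eq_bigr => i _.
  have [_ h _] := hT i (ltn_ord i). by rewrite !hornerZ -mulrBr h.
- apply: leq_trans (size_sum _ _ _) _.
  apply/bigmax_leqP => i _; apply: leq_trans (size_scale_leq _ _) _.
  have [_ _ h] := hT i (ltn_ord i). apply: (leq_trans h). by have := ltn_ord i.
Qed.

Lemma antider_sums S p : antiP S p -> forall N : nat,
  S.[N%:R] = \sum_(j < N) p.[j%:R] /\ S.[- N%:R] = - \sum_(j < N) p.[- (j.+1)%:R].
Proof.
case=> h0 hd _; elim=> [|N [IH1 IH2]]; first by rewrite !big_ord0 oppr0 h0.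
rewrite !big_ord_recr /= -IH1; split.
- by rewrite -hd -natr1 addrCA subrr addr0.
- have e := hd (- N.+1%:R).
  rewrite (_ : - N.+1%:R + 1 = - N%:R) in e; last by rewrite -natr1; ring.
  rewrite IH2 in e. lra.
Qed.

Definition ev (x y : rat) (P : {poly {poly rat}}) : rat := (P.[x%:P]).[y].

Lemma ev_coef x y P : ev x y P = \sum_(a < size P) (P`_a).[y] * x ^+ a.
Proof.
rewrite /ev (horner_coef P) horner_sum; apply: eq_bigr => a _.
by rewrite hornerM -rmorphXn hornerC.
Qed.

Definition PF (r : nat) : {poly {poly rat}} := Fg r (2^-1)%:P%:P 'X ('X%:P).

Lemma Fg_morph (R S : comNzRingType) (f : {rmorphism R -> S}) r h x y :
  f (Fg r h x y) = Fg r (f h) (f x) (f y).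
Proof.
by rewrite /Fg /Bg !(rmorphD, rmorphN, rmorphB, rmorphM, rmorphXn, rmorph_nat, rmorph1).
Qed.

Lemma ev_PF r x y : ev x y (PF r) = Fg r (2^-1) x y.
Proof.
have -> : ev x y (PF r) = horner_eval y (horner_eval x%:P (PF r)) by [].
rewrite /PF !Fg_morph /= !horner_evalE !hornerC hornerX hornerC hornerX.
done.
Qed.

Definition tdeg (D : nat) (P : {poly {poly rat}}) := forall a : nat, (size (P`_a)%R <= D.+1 - a)%N.

Lemma tdeg_mono D D' P : (D <= D')%N -> tdeg D P -> tdeg D' P.
Proof. move=> hD hP a; apply: leq_trans (hP a) _; lia. Qed.

Lemma tdegD D P Q : tdeg D P -> tdeg D Q -> tdeg D (P + Q).
Proof. move=> hP hQ a; rewrite coefD; apply: leq_trans (size_polyD _ _) _; by rewrite geq_max hP hQ. Qed.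

Lemma tdegN D P : tdeg D P -> tdeg D (- P).
Proof. by move=> hP a; rewrite coefN size_polyN. Qed.

Lemma tdegM D1 D2 P Q : tdeg D1 P -> tdeg D2 Q -> tdeg (D1 + D2) (P * Q).
Proof.
move=> hP hQ a; rewrite coefM; apply: leq_trans (size_sum _ _ _) _.
apply/bigmax_leqP => b _.
have hb := ltn_ord b.
have [->|nP] := eqVneq (P`_b) 0; first by rewrite mul0r size_poly0.
have [->|nQ] := eqVneq (Q`_(a - b)) 0; first by rewrite mulr0 size_poly0.
apply: leq_trans (size_polyMleq _ _) _.
have h1 := hP b. have h2 := hQ (a - b)%N.
have s1 : (0 < size (P`_b)%R)%N by rewrite size_poly_gt0.
have s2 : (0 < size (Q`_(a - b))%R)%N by rewrite size_poly_gt0.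
lia.
Qed.

Lemma tdegX D P n : tdeg D P -> tdeg (D * n) (P ^+ n).
Proof.
move=> hP; elim: n => [|n IH].
  by move=> a; rewrite expr0 coef1; case: a => [|a] //=; rewrite ?size_poly1 ?size_poly0.
rewrite exprS mulnS; exact: tdegM.
Qed.

Lemma tdegC (c : {poly rat}) : (size c <= 1)%N -> tdeg 0 c%:P.
Proof. by move=> hc [|a] /=; rewrite coefC //= size_poly0. Qed.

Lemma tdegnat n : tdeg 0 (n%:R).
Proof. rewrite -polyC_natr; apply: tdegC; rewrite -polyC_natr; exact: size_polyC_leq1. Qed.

Lemma tdegXv : tdeg 1 'X.
Proof. by move=> [|[|a]]; rewrite coefX //= ?size_poly0 ?size_poly1. Qed.

Lemma tdegXc : tdeg 1 ('X%:P).
Proof. by move=> [|a]; rewrite coefC //= ?size_polyX ?size_poly0. Qed.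

Lemma tdeg1 : tdeg 0 1.
Proof. rewrite -polyC1; apply: tdegC; by rewrite size_poly1. Qed.

Lemma tdegBg h t : tdeg 0 h -> tdeg 1 t -> tdeg 2 (Bg h t).
Proof.
move=> hh ht; rewrite /Bg.
apply: (tdegM 0 2) => //.
apply: (tdegM 1 1); apply: tdegD => //; apply: tdeg_mono (_ : tdeg 0 _) => //.
- exact: tdeg1.
- exact: tdegnat.
Qed.

Lemma tdeg_PF r : tdeg (2 * r) (PF r).
Proof.
rewrite /PF /Fg.
have hh : tdeg 0 (2^-1)%:P%:P by apply: tdegC; exact: size_polyC_leq1.
have hx := tdegXv. have hy := tdegXc.
have hxy : tdeg 1 ('X + 'X%:P) by apply: tdegD.
have hxxy : tdeg 1 ('X + 'X + 'X%:P) by apply: tdegD => //; apply: tdegD.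
have h3 : forall P, tdeg 2 P -> tdeg 2 (3 * P).
  by move=> P hP; apply: (tdegM 0 2) => //; exact: tdegnat.
have hpow : forall P, tdeg 2 P -> tdeg (2 * r) (P ^+ r) by move=> P hP; exact: tdegX.
apply: tdegD; first apply: tdegD.
- apply: hpow; exact: tdegBg.
- apply: hpow; apply: tdegD; first exact: tdegBg. apply: tdegN; apply: h3; exact: tdegBg.
- apply: hpow; apply: tdegD; last by apply: h3; exact: tdegBg.
  apply: tdegD; first exact: tdegBg. apply: tdegN; apply: h3; exact: tdegBg.
Qed.

Lemma Q_exists r : exists Q : {poly rat}, (size Q <= (2 * r).+2)%N /\ forall N : nat,
  Q.[N%:R] = \sum_(j < N) Fg r 2^-1 N%:R j%:R /\
  Q.[- N%:R] = - \sum_(j < N) Fg r 2^-1 (- N%:R) (- (j.+1)%:R).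
Proof.
set P := PF r.
have [S HS] := antider_family (size P) (fun a => P`_a).
exists (\sum_(a < size P) 'X^a * S a).
have hT := tdeg_PF r.
have hsP : (size P <= (2 * r).+1)%N.
  apply/leq_sizeP => j hj; apply/eqP; rewrite -size_poly_eq0 -leqn0.
  apply: leq_trans (hT j) _; lia.
split.
  apply: leq_trans (size_sum _ _ _) _.
  apply/bigmax_leqP => a _; apply: leq_trans (size_polyMleq _ _) _.
  have [_ _ hs] := HS a (ltn_ord a).
  have ha := ltn_ord a. have := hT a. rewrite -/P size_polyXn. lia.
move=> N.
have hQ : forall x, (\sum_(a < size P) 'X^a * S a).[x] = \sum_(a < size P) x ^+ a * (S a).[x].
  by move=> x; rewrite horner_sum; apply: eq_bigr => a _; rewrite hornerM hornerXn.
rewrite !hQ; split.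
- rewrite (eq_bigr (fun a : 'I_(size P) => \sum_(j < N) (P`_a).[j%:R] * N%:R ^+ a)); last first.
    move=> a _; have [h1 _] := antider_sums _ _ (HS a (ltn_ord a)) N.
    by rewrite h1 mulr_sumr; apply: eq_bigr => j _; rewrite mulrC.
  rewrite exchange_big /=; apply: eq_bigr => j _.
  by rewrite -ev_PF ev_coef.
- rewrite (eq_bigr (fun a : 'I_(size P) => - \sum_(j < N) (P`_a).[- (j.+1)%:R] * (- N%:R) ^+ a)); last first.
    move=> a _; have [_ h2] := antider_sums _ _ (HS a (ltn_ord a)) N.
    by rewrite h2 mulrN mulr_sumr; congr (- _); apply: eq_bigr => j _; rewrite mulrC.
  rewrite sumrN exchange_big /=; congr (- _); apply: eq_bigr => j _.
  by rewrite -ev_PF ev_coef.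
Qed.

Lemma sum_rev (f : rat -> rat) N : \sum_(j < N) f j%:R = \sum_(j < N) f (N%:R - 1 - j%:R).
Proof.
rewrite (reindex_inj rev_ord_inj) /=; apply: eq_bigr => j _.
congr f; rewrite natrB ?ltn_ord // -natr1; ring.
Qed.

Lemma sum_shift (g : rat -> rat) N : \sum_(j < N) g (j%:R - 2) =
  \sum_(j < N) g j%:R + g (-2) + g (-1) - g (N%:R - 2) - g (N%:R - 1).
Proof.
elim: N => [|N IH]; first by rewrite !big_ord0 !sub0r; ring.
rewrite !big_ord_recr /= IH.
have e1 : N.+1%:R - 2 = N%:R - 1 :> rat by rewrite -natr1; ring.
have e2 : N.+1%:R - 1 = N%:R :> rat by rewrite -natr1; ring.
rewrite e1 e2; ring.
Qed.

Lemma reflect_sum r N : \sum_(j < N) Fg r (2^-1 : rat) (- N%:R) (- (j.+1)%:R) = \sum_(j < N) Fg r 2^-1 N%:R j%:R.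
Proof.
set x : rat := N%:R.
pose g t := (Bq (x + t) - 3 * Bq t) ^+ r.
have Fneg : forall j : nat, Fg r 2^-1 (- x) (- (j.+1)%:R) =
   Bq (j%:R - 2) ^+ r + g (j%:R - 2) + Bq (x - 1 - j%:R) ^+ r.
  move=> j; rewrite /Fg /g -natr1; congr (_ ^+ r + _ ^+ r + _ ^+ r); rewrite /Bq /Bg; ring.
have Fpos : forall j : nat, Fg r 2^-1 x j%:R = Bq j%:R ^+ r + g j%:R + Bq (x - 3 - j%:R) ^+ r.
  move=> j; rewrite /Fg /g; congr (_ ^+ r + _ ^+ r + _ ^+ r); rewrite /Bq /Bg; ring.
under eq_bigr => j _ do rewrite Fneg. under [RHS]eq_bigr => j _ do rewrite Fpos.
rewrite !big_split /= sum_shift.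
rewrite [X in _ = X + _ + _](sum_rev (fun t => Bq t ^+ r)).
rewrite [X in _ = _ + _ + X](sum_rev (fun t => Bq (x - 3 - t) ^+ r)) -/x.
have -> : \sum_(j < N) Bq (x - 3 - (x - 1 - j%:R)) ^+ r = \sum_(j < N) Bq (j%:R - 2) ^+ r.
  by apply: eq_bigr => j _; congr (Bq _ ^+ r); ring.
have h1 : g (-2) = Bq (x - 2) ^+ r by rewrite /g; congr (_ ^+ r); rewrite /Bq /Bg; ring.
have h2 : g (-1) = Bq (x - 1) ^+ r by rewrite /g; congr (_ ^+ r); rewrite /Bq /Bg; ring.
have h3 : g (x - 2) = Bq (x - 1) ^+ r by rewrite /g; congr (_ ^+ r); rewrite /Bq /Bg; ring.
have h4 : g (x - 1) = Bq (x - 2) ^+ r by rewrite /g; congr (_ ^+ r); rewrite /Bq /Bg; ring.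
rewrite h1 h2 h3 h4. ring.
Qed.

Lemma poly_nat_roots (p : {poly rat}) : (forall n : nat, p.[n%:R] = 0) -> p = 0.
Proof.
move=> hr; apply/eqP; apply/negPn/negP => hp.
set rs := [seq (i%:R : rat) | i <- iota 0 (size p)].
have h1 : all (root p) rs by apply/allP => x /mapP [i _ ->]; rewrite /root hr.
have h2 : uniq rs.
  rewrite map_inj_uniq ?iota_uniq // => a b /eqP; rewrite eqr_nat => /eqP.
  done.
have := max_poly_roots hp h1 h2.
by rewrite size_map size_iota ltnn.
Qed.

Lemma even_zero (Q : {poly rat}) : (forall N : nat, Q.[N%:R] + Q.[- N%:R] = 0) ->
  forall i, ~~ odd i -> Q`_i = 0.
Proof.
move=> hQ i hi.
pose R := \poly_(i < size Q) (Q`_i + (-1) ^+ i * Q`_i).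
have hR : R = 0.
  apply: poly_nat_roots => n; rewrite -(hQ n) horner_poly (horner_coef Q) (horner_coef Q (- _)).
  rewrite -big_split /=; apply: eq_bigr => k _; rewrite (exprNn (n%:R : rat)); ring.
case: (ltnP i (size Q)) => hs; last by rewrite nth_default.
have := congr1 (fun p : {poly rat} => p`_i) hR.
rewrite /= coef_poly hs coef0 -signr_odd (negbTE hi) expr0 mul1r => h.
lra.
Qed.

Lemma sum_pairs (f : nat -> rat) m : \sum_(k < (2 * m)%N) f k = \sum_(i < m) (f (2 * i)%N + f (2 * i).+1).
Proof.
elim: m => [|m IH]; first by rewrite !big_ord0.
have -> : (2 * m.+1 = (2 * m).+2)%N by lia.
by rewrite !big_ord_recr /= IH addrA.
Qed.

Theorem theorem5p1 (r : nat) (hr : (1 <= r)%N) :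
  exists c : 'I_r.+1 -> rat,
    forall n : nat,
      (u r n)%:~R = \sum_(i < r.+1) c i * (2 ^+ ((2 * i + 1) * n)%N : rat).
Proof.
have [Q [hs hQ]] := Q_exists r.
have hodd : forall N : nat, Q.[N%:R] + Q.[- N%:R] = 0.
  move=> N; have [-> ->] := hQ N; rewrite reflect_sum; ring.
exists (fun i : 'I_r.+1 => Q`_(2 * i).+1) => n.
rewrite u_eq // sum_blocks -(proj1 (hQ _)) (horner_coef_wide _ hs).
rewrite (_ : (2 * r).+2 = 2 * r.+1)%N; last lia.
rewrite (sum_pairs (fun k => Q`_k * _ ^+ k)); apply: eq_bigr => i _.
rewrite even_zero //; last by rewrite oddM.
rewrite mul0r add0r natrX -exprM.
congr (_ * (_ ^+ _)); lia.
Qed.
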